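(* Let $U$ be a real-valued utility function satisfying conditions C1, C2, C3 (as defined in the context), and let $U(\epsilon)$ be the associated averaged utility. Then for every POVM $\alpha$ there exists a POVM $\alpha'$ all of whose elements have rank one such that $U(\alpha')\ge U(\alpha)$. Consequently, if $\sup_\epsilon U(\epsilon)$ is attained, it is attained by a POVM consisting of rank-one elements.
   Context: Setting: $H$ finite-dimensional Hilbert space; density operators $\rho_1,\dots,\rho_n$ on $H$ with priors $q_\nu>0$, $\sum q_\nu=1$. A POVM with $m$ outcomes is $\epsilon=(A_1,\dots,A_m)$, $A_y\ge0$, $\sum A_y=\mathbb{1}$. $p(\epsilon_y|N_\nu)=\mathrm{tr}(A_y\rho_\nu)$, $p(N_\nu,\epsilon_y)=q_\nu\mathrm{tr}(A_y\rho_\nu)$. A decision strategy is $\Gamma:\{1,\dots,m\}\to\{0,\dots,n\}$. A utility function assigns a real number $U(\epsilon,y,\Gamma,\nu)$ to every POVM $\epsilon$, outcome $y$, strategy $\Gamma$ for $\epsilon$ and $\nu\in\{1,\dots,n\}$; $U(\epsilon)=\max_\Gamma\sum_y\sum_\nu p(N_\nu,\epsilon_y)U(\epsilon,y,\Gamma,\nu)$. C1: for every POVM $\alpha=(A_1,\dots,A_m)$ and strategy $\Gamma$, if $A_i,A_j$ are nonzero and proportional and $\Gamma(i)=\Gamma(j)$ then $U(\alpha,i,\Gamma,\nu)=U(\alpha,j,\Gamma,\nu)$ for all $\nu$. C2: for every POVM $\alpha$ there is a maximizer $\Gamma^*$ in the definition of $U(\alpha)$ with $\Gamma^*(i)=\Gamma^*(j)$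 whenever $A_i,A_j$ are nonzero and proportional. C3: for a POVM $\alpha$ with strategy $\Gamma$ and $i\ne j$ with $\Gamma(i)=\Gamma(j)$, let $\alpha'$ be obtained by replacing $A_i,A_j$ by the single element $A_i+A_j$ (outcome $i+j$) and $\Gamma'$ the induced strategy ($\Gamma'(i+j)=\Gamma(i)$, otherwise unchanged); then for all $\nu$ with $\mathrm{tr}((A_i+A_j)\rho_\nu)>0$, $U(\alpha',i+j,\Gamma',\nu)\le[\mathrm{tr}(A_i\rho_\nu)U(\alpha,i,\Gamma,\nu)+\mathrm{tr}(A_j\rho_\nu)U(\alpha,j,\Gamma,\nu)]/\mathrm{tr}((A_i+A_j)\rho_\nu)$, with equality if $A_i,A_j$ are nonzero and proportional, and $U(\alpha',k,\Gamma',\nu)=U(\alpha,k,\Gamma,\nu)$ for all $k\ne i,j$.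
   Formalization: A POVM $(A_1,\dots,A_m)$ has only nonzero elements $A_y\ne0$, both in conditions C1–C3 and in the conclusions, so POVMs with zero elements are excluded throughout. Apart from conventions, each condition added here is assumed in the paper as well or is needed for the statement above to hold. *)

(* Defs.v *)
(* H = C^d with C an arbitrary numClosedFieldType
   (e.g. algebraic complex numbers); operators are 'M[C]_d. *)
From HB Require Import structures.
From mathcomp Require Import all_boot all_order all_algebra.
Set Implicit Arguments. Unset Strict Implicit. Unset Printing Implicit Defensive.
Import Order.TTheory GRing.Theory Num.Theory.
Local Open Scope ring_scope.

Section Defs.
Variable C : numClosedFieldType.

Definition adjmx d (A : 'M[C]_d) : 'M[C]_d := map_mx Num.conj (trmx A).

Definition psdmx d (A : 'M[C]_d) : Prop :=
  adjmx A = A /\ forall v : 'rV[C]_d, 0 <= (v *m A *m trmx (map_mx Num.conj v)) 0 0.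

Definition density d (rho : 'M[C]_d) : Prop := psdmx rho /\ \tr rho = 1.

Definition povm d m (A : {ffun 'I_m -> 'M[C]_d}) : Prop :=
  (forall y, psdmx (A y)) /\ (forall y, A y != 0) /\ \sum_(y < m) A y = 1%:M.

Definition proportional d (A B : 'M[C]_d) : Prop := exists c : C, A = c *: B.

(* utility function: U m eps y Gamma nu ; strategies are finite functions
   'I_m -> 'I_n.+1 (values 0..n), hypotheses nu range over 'I_n *)
Definition utility d n :=
  forall m : nat, {ffun 'I_m -> 'M[C]_d} -> 'I_m -> {ffun 'I_m -> 'I_n.+1} -> 'I_n -> C.

Definition avgU d n (rho : 'I_n -> 'M[C]_d) (q : 'I_n -> C) (U : utility d n)
    m (A : {ffun 'I_m -> 'M[C]_d}) (G : {ffun 'I_m -> 'I_n.+1}) : C :=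
  \sum_(y < m) \sum_(nu < n) q nu * \tr (A y *m rho nu) * U m A y G nu.

Definition Ubar d n (rho : 'I_n -> 'M[C]_d) (q : 'I_n -> C) (U : utility d n)
    m (A : {ffun 'I_m -> 'M[C]_d}) : C :=
  \big[Order.max / avgU rho q U A [ffun _ => ord0]]_(G : {ffun 'I_m -> 'I_n.+1})
     avgU rho q U A G.

(* merging outcomes i and j (i <> j): outcome j is deleted (the remaining
   outcomes are re-indexed by lift j), and the element at the position of i
   becomes A i + A j *)
Definition mergePOVM d m' (A : {ffun 'I_m'.+1 -> 'M[C]_d}) (i j : 'I_m'.+1)
  : {ffun 'I_m' -> 'M[C]_d} :=
  [ffun k => if lift j k == i then A i + A j else A (lift j k)].

Definition mergeStrat n m' (G : {ffun 'I_m'.+1 -> 'I_n.+1}) (j : 'I_m'.+1)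
  : {ffun 'I_m' -> 'I_n.+1} := [ffun k => G (lift j k)].

Definition condC1 d n (U : utility d n) : Prop :=
  forall m (A : {ffun 'I_m -> 'M[C]_d}) (G : {ffun 'I_m -> 'I_n.+1}) (i j : 'I_m),
    povm A -> A i != 0 -> A j != 0 -> proportional (A i) (A j) -> G i = G j ->
    forall nu, U m A i G nu = U m A j G nu.

Definition condC2 d n (rho : 'I_n -> 'M[C]_d) (q : 'I_n -> C) (U : utility d n) : Prop :=
  forall m (A : {ffun 'I_m -> 'M[C]_d}), povm A ->
    exists Gs : {ffun 'I_m -> 'I_n.+1},
      (forall G, avgU rho q U A G <= avgU rho q U A Gs) /\
      (forall i j, A i != 0 -> A j != 0 -> proportional (A i) (A j) -> Gs i = Gs j).

Definition condC3 d n (rho : 'I_n -> 'M[C]_d) (U : utility d n) : Prop :=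
  forall m' (A : {ffun 'I_m'.+1 -> 'M[C]_d}) (G : {ffun 'I_m'.+1 -> 'I_n.+1})
         (i j : 'I_m'.+1),
    povm A -> i != j -> G i = G j ->
    (forall k : 'I_m', lift j k = i -> forall nu : 'I_n,
       0 < \tr ((A i + A j) *m rho nu) ->
       U m' (mergePOVM A i j) k (mergeStrat G j) nu
         <= (\tr (A i *m rho nu) * U m'.+1 A i G nu
             + \tr (A j *m rho nu) * U m'.+1 A j G nu) / \tr ((A i + A j) *m rho nu)
       /\ (A i != 0 -> A j != 0 -> proportional (A i) (A j) ->
           U m' (mergePOVM A i j) k (mergeStrat G j) nu
           = (\tr (A i *m rho nu) * U m'.+1 A i G nu
              + \tr (A j *m rho nu) * U m'.+1 A j G nu) / \tr ((A i + A j) *m rho nu)))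
    /\
    (forall k : 'I_m', lift j k != i -> forall nu : 'I_n,
       U m' (mergePOVM A i j) k (mergeStrat G j) nu = U m'.+1 A (lift j k) G nu).

End Defs.

(* Main.v *)
Require Import Defs.
From HB Require Import structures.
From mathcomp Require Import all_boot all_order all_algebra.
From mathcomp Require Import sesquilinear spectral.
From Stdlib Require Import Lia.
From mathcomp Require Import zify.
Import Order.TTheory GRing.Theory Num.Theory.
Set Implicit Arguments. Unset Strict Implicit. Unset Printing Implicit Defensive.
Local Open Scope ring_scope.

Section Mx.
Variable C : numClosedFieldType.
Variable d : nat.

Definition ct m n (X : 'M[C]_(m, n)) : 'M[C]_(n, m) := map_mx Num.conj (trmx X).

Lemma ctE m n (X : 'M[C]_(m, n)) : trmx (map_mx Num.conj X) = ct X.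
Proof. by apply/matrixP=> i j; rewrite !mxE. Qed.

Lemma ct_mul m n p (X : 'M[C]_(m, n)) (Y : 'M[C]_(n, p)) : ct (X *m Y) = ct Y *m ct X.
Proof. by rewrite /ct trmx_mul map_mxM. Qed.

Lemma ctK m n (X : 'M[C]_(m, n)) : ct (ct X) = X.
Proof. by apply/matrixP=> i j; rewrite !mxE conjCK. Qed.

Definition nnrow (l : 'rV[C]_d) := forall i, 0 <= l 0 i.

Lemma ct_diag (l : 'rV[C]_d) : nnrow l -> ct (diag_mx l) = diag_mx l.
Proof.
move=> hl; apply/matrixP=> i j; rewrite !mxE.
case: (eqVneq j i) => [->|nij]; first by rewrite !mulr1n geC0_conj.
by rewrite ?eq_sym ?(negbTE nij) !mulr0n conjC0.
Qed.

Lemma quad_diag (u : 'rV[C]_d) (l : 'rV[C]_d) : nnrow l ->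
  0 <= (u *m diag_mx l *m ct u) 0 0.
Proof.
move=> hl; rewrite mul_mx_diag !mxE; apply: sumr_ge0 => i _; rewrite !mxE.
by rewrite -mulrA mulrCA mulr_ge0 // mul_conjC_ge0.
Qed.

Definition decomp (X : 'M[C]_d) (W : 'M[C]_d) (l : 'rV[C]_d) :=
  [/\ W *m ct W = 1%:M, nnrow l & X = ct W *m diag_mx l *m W].

Lemma adj_ct (X : 'M[C]_d) : adjmx X = ct X. Proof. by []. Qed.

Lemma psd_form (W : 'M[C]_d) (l : 'rV[C]_d) : nnrow l ->
  psdmx (ct W *m diag_mx l *m W).
Proof.
move=> hl; split.
  by rewrite adj_ct !ct_mul ctK ct_diag // mulmxA.
move=> v; rewrite ctE.
have -> : v *m (ct W *m diag_mx l *m W) *m ct v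
   = (v *m ct W) *m diag_mx l *m ct (v *m ct W).
  by rewrite ct_mul ctK !mulmxA.
exact: quad_diag.
Qed.

Lemma rowquad (W M : 'M[C]_d) i :
  (W *m M *m ct W) i i = (row i W *m M *m ct (row i W)) 0 0.
Proof.
rewrite !mxE; apply: eq_bigr => j _; rewrite !mxE; congr (_ * _).
by apply: eq_bigr => k _; rewrite !mxE.
Qed.

Lemma tr_nonneg (W : 'M[C]_d) (l : 'rV[C]_d) (rh : 'M[C]_d) : nnrow l -> psdmx rh ->
  0 <= \tr (ct W *m diag_mx l *m W *m rh).
Proof.
move=> hl [_ hr]; rewrite -!mulmxA mxtrace_mulC -!mulmxA mul_diag_mx.
rewrite /mxtrace; apply: sumr_ge0 => i _; rewrite mxE.
apply: mulr_ge0 => //; rewrite mulmxA rowquad.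
by have := hr (row i W); rewrite ctE.
Qed.

Lemma decomp_exists (X : 'M[C]_d) : psdmx X -> exists W l, decomp X W l.
Proof.
move=> [hadj hpos].
have hh : X \is hermsymmx.
  by rewrite qualifE /= expr0 scale1r; apply/eqP; rewrite -[LHS]hadj.
have /orthomx_spectralP hX := hermitian_normalmx hh.
set W := spectralmx X in hX; set l := spectral_diag X in hX.
have Wu : W *m ct W = 1%:M by apply/unitarymxP/spectral_unitarymx.
rewrite invmx_unitary ?spectral_unitarymx // in hX.
exists W, l; split => //.
move=> i.
have : W *m X *m ct W = diag_mx l.
  by rewrite hX !mulmxA Wu mul1mx -mulmxA Wu mulmx1.
move/matrixP/(_ i i); rewrite [diag_mx l i i]mxE eqxx mulr1n => <-.
rewrite rowquad; have := hpos (row i W); rewrite ctE.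
by [].
Qed.

Definition nz (l : 'rV[C]_d) := #|[pred i | l 0 i != 0]|.

Lemma decomp_nz X W l k : decomp X W l -> l 0 k != 0 -> X != 0.
Proof.
move=> [Wu hl hX] hk; apply/eqP => h0.
have : W *m X *m ct W = diag_mx l.
  by rewrite hX !mulmxA Wu mul1mx -mulmxA Wu mulmx1.
rewrite h0 mulmx0 mul0mx => /matrixP/(_ k k); rewrite !mxE eqxx mulr1n => e.
by move: hk; rewrite -e eqxx.
Qed.

Lemma decomp_rank1 X W l : decomp X W l -> X != 0 -> (nz l <= 1)%N -> \rank X = 1%N.
Proof.
move=> [Wu hl hX] hX0 hnz.
case: (pickP [pred i | l 0 i != 0]) => [k /= hk|h0]; last first.
  have hd : diag_mx l = 0.
    apply/matrixP=> i j; rewrite !mxE; have := h0 i; rewrite /= => /negbFE/eqP->.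
    by rewrite mul0rn.
  by move: hX0; rewrite hX hd mulmx0 mul0mx eqxx.
have oth : forall i, i != k -> l 0 i = 0.
  move=> i hik; apply/eqP; apply: contraTT hnz => hi; rewrite -ltnNge.
  have := subset_leq_card (_ : pred2 i k \subset [pred i | l 0 i != 0]).
  rewrite card2 hik; apply.
  by apply/subsetP => x /pred2P[->|->].
have hd : diag_mx l = l 0 k *: delta_mx k k.
  apply/matrixP=> i j; rewrite !mxE.
  case: (eqVneq i k) => [->|hik]; last by rewrite (oth i hik) mul0rn mulr0n mulr0.
  case: (eqVneq k j) => [->|hkj]; by rewrite ?mulr1n ?mulr1 ?mulr0n ?mulr0.
apply/eqP; rewrite eqn_leq; apply/andP; split.
  rewrite hX; apply: leq_trans (mxrankM_maxl _ _) _.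
  apply: leq_trans (mxrankM_maxr _ _) _.
  by rewrite hd; apply: leq_trans (mxrank_scale _ _) _; rewrite mxrank_delta.
by rewrite lt0n mxrank_eq0.
Qed.

Lemma decomp_split X W l : decomp X W l -> (1 < nz l)%N ->
  exists P Q lP lQ, [/\ X = P + Q, decomp P W lP, decomp Q W lQ,
     nz lP = 1%N & nz lQ = (nz l).-1].
Proof.
move=> [Wu hl hX] hnz.
case: (pickP [pred i | l 0 i != 0]) => [k /= hk|h0]; last first.
  by move: hnz; rewrite /nz (eq_card0 h0).
pose lP := \row_i (if i == k then l 0 i else 0).
pose lQ := \row_i (if i == k then 0 else l 0 i).
exists (ct W *m diag_mx lP *m W), (ct W *m diag_mx lQ *m W), lP, lQ; split.
- rewrite -mulmxDl -mulmxDr hX; congr (_ *m _ *m _).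
  apply/matrixP=> i j; rewrite !mxE; case: ifP => _; by rewrite ?mul0rn ?addr0 ?add0r.
- split => // i; rewrite mxE; case: (i == k) => //.
- split => // i; rewrite mxE; case: (i == k) => //.
- rewrite /nz (eq_card (B := pred1 k)) ?card1 // => i; rewrite !inE mxE.
  by case: ifP => [/eqP->|_]; rewrite ?hk ?eqxx.
- have hkin : k \in [pred i | l 0 i != 0] by rewrite inE.
  rewrite /nz [in RHS](cardD1 k) hkin add1n /=; apply: eq_card => i.
  rewrite !inE mxE; case: ifP => [/eqP->|_]; by rewrite ?eqxx.
Qed.

End Mx.
Section Ins.
Variable C : numClosedFieldType.
Variables d n : nat.
Variable rho : 'I_n -> 'M[C]_d.
Variable q : 'I_n -> C.
Variable U : utility C d n.

Lemma Ubar_attained m (A : {ffun 'I_m -> 'M[C]_d}) :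
  exists G, Ubar rho q U A = avgU rho q U A G.
Proof.
rewrite /Ubar; apply: (big_ind (fun x => exists G, x = avgU rho q U A G)).
- by exists [ffun _ => ord0].
- move=> x y [G1 ->] [G2 ->]; rewrite /Order.max; case: ifP => _.
  by exists G2. by exists G1.
- by move=> G _; exists G.
Qed.

Lemma le_maxl_gen (x y : C) : x <= Order.max x y.
Proof. by rewrite /Order.max; case: ifP => [/ltW|_]. Qed.

Lemma le_maxr_real (x y : C) : x \is Num.real -> y \is Num.real -> y <= Order.max x y.
Proof.
move=> rx ry; rewrite /Order.max; case: ifP => [_|]; first by [].
by move/negbT; rewrite real_ltNge // negbK.
Qed.

Lemma bigmax_ge (T : eqType) (r : seq T) (F : T -> C) x0 t :
  (forall t, F t \is Num.real) -> x0 \is Num.real -> t \in r ->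
  F t <= \big[Order.max/x0]_(i <- r) F i.
Proof.
move=> hF h0; elim: r => [//|a r IH]; rewrite inE big_cons => /orP[/eqP->|tr].
  exact: le_maxl_gen.
have rr : \big[Order.max/x0]_(i <- r) F i \is Num.real.
  apply: (big_ind (fun x => x \is Num.real)) => //.
  by move=> x y rx ry; rewrite /Order.max; case: ifP.
exact: le_trans (IH tr) (le_maxr_real (hF a) rr).
Qed.

Lemma avgU_le_Ubar m (A : {ffun 'I_m -> 'M[C]_d}) G :
  (forall G, avgU rho q U A G \is Num.real) ->
  avgU rho q U A G <= Ubar rho q U A.
Proof.
move=> hr; apply: bigmax_ge => //; exact: mem_index_enum.
Qed.

Definition ins m (A : {ffun 'I_m -> 'M[C]_d}) (y : 'I_m) (P Q : 'M[C]_d)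
  : {ffun 'I_m.+1 -> 'M[C]_d} :=
  [ffun k => if unlift ord_max k is Some k' then (if k' == y then P else A k') else Q].

Definition insG m (G : {ffun 'I_m -> 'I_n.+1}) (y : 'I_m) : {ffun 'I_m.+1 -> 'I_n.+1} :=
  [ffun k => if unlift ord_max k is Some k' then G k' else G y].

Lemma ins_lift m (A : {ffun 'I_m -> 'M[C]_d}) y P Q k :
  ins A y P Q (lift ord_max k) = if k == y then P else A k.
Proof. by rewrite ffunE liftK. Qed.

Lemma ins_max m (A : {ffun 'I_m -> 'M[C]_d}) y P Q : ins A y P Q ord_max = Q.
Proof. by rewrite ffunE unlift_none. Qed.

Lemma insG_lift m (G : {ffun 'I_m -> 'I_n.+1}) y k : insG G y (lift ord_max k) = G k.
Proof. by rewrite ffunE liftK. Qed.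

Lemma insG_max m (G : {ffun 'I_m -> 'I_n.+1}) y : insG G y ord_max = G y.
Proof. by rewrite ffunE unlift_none. Qed.

Lemma merge_ins m (A : {ffun 'I_m -> 'M[C]_d}) y P Q : A y = P + Q ->
  mergePOVM (ins A y P Q) (lift ord_max y) ord_max = A.
Proof.
move=> hA; apply/ffunP => k; rewrite ffunE (inj_eq (@lift_inj _ _)).
rewrite !ins_lift ins_max eqxx; case: (k =P y) => [->|]; first by rewrite hA. by [].
Qed.

Lemma mergeG_ins m (G : {ffun 'I_m -> 'I_n.+1}) y :
  mergeStrat (insG G y) ord_max = G.
Proof. by apply/ffunP => k; rewrite ffunE insG_lift. Qed.

Lemma widen_lift m (k : 'I_m) : widen_ord (leqnSn m) k = lift ord_max k.
Proof. by apply: val_inj; rewrite /= /bump leqNgt ltn_ord. Qed.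

Lemma povm_ins m (A : {ffun 'I_m -> 'M[C]_d}) y P Q : povm A -> A y = P + Q ->
  psdmx P -> psdmx Q -> P != 0 -> Q != 0 -> povm (ins A y P Q).
Proof.
move=> [hp [hnz hs]] hA pP pQ nP nQ; split; [|split].
- move=> k; rewrite ffunE; case: unliftP => [k' _|_] //.
  by case: ifP.
- move=> k; rewrite ffunE; case: unliftP => [k' _|_] //.
  by case: ifP.
- rewrite big_ord_recr /= ins_max.
  under eq_bigr => k _ do rewrite widen_lift ins_lift.
  rewrite (bigD1 y) //= eqxx -[in RHS]hs [in RHS](bigD1 y) //= hA.
  rewrite addrAC; congr (_ + _).
  by apply: eq_bigr => k /negbTE ->.
Qed.

Lemma avgU_ins m (A : {ffun 'I_m -> 'M[C]_d}) y P Q G :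
  condC3 rho U -> (forall nu, 0 < q nu) ->
  povm A -> A y = P + Q -> psdmx P -> psdmx Q -> P != 0 -> Q != 0 ->
  (forall nu, 0 <= \tr (P *m rho nu)) -> (forall nu, 0 <= \tr (Q *m rho nu)) ->
  avgU rho q U A G <= avgU rho q U (ins A y P Q) (insG G y).
Proof.
move=> hC3 hq pA hA pP pQ nP nQ tP0 tQ0.
have pA' := povm_ins pA hA pP pQ nP nQ.
have hGe : insG G y (lift ord_max y) = insG G y ord_max by rewrite insG_lift insG_max.
have hne : lift ord_max y != ord_max by rewrite eq_sym neq_lift.
have [H1 H2] := hC3 m (ins A y P Q) (insG G y) (lift ord_max y) ord_max pA' hne hGe.
rewrite merge_ins // mergeG_ins ins_lift eqxx ins_max in H1.
rewrite merge_ins // mergeG_ins in H2.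
set F' := fun k => \sum_(nu < n) q nu * \tr (ins A y P Q k *m rho nu)
   * U (ins A y P Q) k (insG G y) nu.
set F0 := fun k => \sum_(nu < n) q nu * \tr (A k *m rho nu) * U A k G nu.
have eR : avgU rho q U (ins A y P Q) (insG G y)
   = F' (lift ord_max y) + \sum_(k < m | k != y) F' (lift ord_max k) + F' ord_max.
  rewrite /avgU big_ord_recr /=; congr (_ + _).
  under eq_bigr => k _ do rewrite widen_lift.
  by rewrite (bigD1 y).
have eL : avgU rho q U A G = F0 y + \sum_(k < m | k != y) F0 k by rewrite /avgU (bigD1 y).
have eS : \sum_(k < m | k != y) F0 k = \sum_(k < m | k != y) F' (lift ord_max k).
  apply: eq_bigr => k hk; apply: eq_bigr => nu _.
  rewrite ins_lift (negbTE hk) H2 //.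
  by rewrite (inj_eq (@lift_inj _ _)).
rewrite eR eL eS addrAC lerD2r /F0 /F' -big_split /=.
apply: ler_sum => nu _; rewrite ins_lift eqxx ins_max hA.
have htA : \tr ((P + Q) *m rho nu) = \tr (P *m rho nu) + \tr (Q *m rho nu).
  by rewrite mulmxDl mxtraceD.
have := tP0 nu; have := tQ0 nu.
move=> hQ hP.
have : 0 <= \tr ((P + Q) *m rho nu) by rewrite htA addr_ge0.
rewrite le0r => /orP[/eqP h0|hpos].
  move: h0; rewrite htA => /eqP; rewrite paddr_eq0 // => /andP[/eqP e1 /eqP e2].
  by rewrite e1 e2 !(addr0, mulr0, mul0r).
have [h _] := H1 y erefl nu hpos.
rewrite -!mulrA -mulrDr; apply: ler_wpM2l; first exact: ltW.
rewrite ler_pdivlMr // in h.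
by rewrite mulrC.
Qed.

End Ins.

Section Main.
Variable C : numClosedFieldType.
Variables d n : nat.
Variable rho : 'I_n -> 'M[C]_d.
Variable q : 'I_n -> C.
Variable U : utility C d n.
Hypothesis hC3 : condC3 rho U.
Hypothesis hq : forall nu, 0 < q nu.
Hypothesis hrho : forall nu, psdmx (rho nu).
Hypothesis hreal : forall m (A : {ffun 'I_m -> 'M[C]_d}) G, povm A ->
  avgU rho q U A G \is Num.real.

Definition goodB m (A : {ffun 'I_m -> 'M[C]_d}) :=
  exists m' (B : {ffun 'I_m' -> 'M[C]_d}),
    [/\ povm B, (forall y, \rank (B y) = 1%N) & Ubar rho q U A <= Ubar rho q U B].

Lemma base_case m (A : {ffun 'I_m -> 'M[C]_d}) (Ws : 'I_m -> 'M[C]_d) (ls : 'I_m -> 'rV[C]_d) :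
  povm A -> (forall y, decomp (A y) (Ws y) (ls y)) ->
  (forall y, (nz (ls y) <= 1)%N) -> goodB A.
Proof.
move=> pA hd hnz; exists m, A; split => //.
by move=> y; apply: decomp_rank1 (hd y) _ (hnz y); have [_ [hnz0 _]] := pA.
Qed.

Lemma main_ind N : forall m (A : {ffun 'I_m -> 'M[C]_d}) (Ws : 'I_m -> 'M[C]_d)
  (ls : 'I_m -> 'rV[C]_d),
  povm A -> (forall y, decomp (A y) (Ws y) (ls y)) ->
  (\sum_(y < m) (nz (ls y)).-1 <= N)%N -> goodB A.
Proof.
elim: N => [|N IH] m A Ws ls pA hd hN.
  apply: base_case pA hd _ => y.
  move: hN; rewrite leqn0 => /eqP/eqP; rewrite sum_nat_eq0 => /forallP/(_ y).
  by rewrite implyTb => /eqP h; rewrite -subn1 in h; lia.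
case: (pickP [pred y | 1 < nz (ls y)])%N => [y /= hy|h0]; last first.
  by apply: base_case pA hd _ => y; have := h0 y; rewrite /= => /negbT; rewrite -leqNgt.
have [P [Q [lP [lQ [hA dP dQ nP nQ]]]]] := decomp_split (hd y) hy.
have [Wu hl hX] := hd y.
have nz0 : forall (X W : 'M[C]_d) (l : 'rV[C]_d), decomp X W l -> (0 < nz l)%N -> X != 0.
  move=> X W l dX hpos; case: (pickP [pred i | l 0 i != 0]) => [k hk|h0].
    exact: decomp_nz dX hk.
  by move: hpos; rewrite /nz (eq_card0 h0).
have P0 : P != 0 by apply: nz0 dP _; rewrite nP.
have Q0 : Q != 0 by apply: nz0 dQ _; rewrite nQ; lia.
have psdD : forall (X W : 'M[C]_d) (l : 'rV[C]_d), decomp X W l -> psdmx X.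
  by move=> X W l [_ hl' ->]; apply: psd_form.
have trD : forall (X W : 'M[C]_d) (l : 'rV[C]_d) nu, decomp X W l -> psdmx (rho nu) -> 0 <= \tr (X *m rho nu).
  by move=> X W l nu [_ hl' ->]; apply: tr_nonneg.
pose Ws' (k : 'I_m.+1) := if unlift ord_max k is Some k' then Ws k' else Ws y.
pose ls' (k : 'I_m.+1) := if unlift ord_max k is Some k' then
   (if k' == y then lP else ls k') else lQ.
have pA' := povm_ins pA hA (psdD _ _ _ dP) (psdD _ _ _ dQ) P0 Q0.
have hd' : forall k, decomp (ins A y P Q k) (Ws' k) (ls' k).
  move=> k; rewrite /Ws' /ls' ffunE; case: unliftP => [k' _|_] //.
  by case: eqP => [->|_].
have [m' [B [pB rB hB]]] : goodB (ins A y P Q).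
  apply: IH pA' hd' _.
  rewrite big_ord_recr /=.
  under eq_bigr => k _ do rewrite widen_lift /ls' liftK.
  rewrite /ls' unlift_none (bigD1 y) //= eqxx nP /=.
  move: hN; rewrite (bigD1 y) //= nQ.
  have -> : (\sum_(i < m | i != y) (nz (if i == y then lP else ls i)).-1
          = \sum_(i < m | i != y) (nz (ls i)).-1)%N.
    by apply: eq_bigr => i /negbTE ->.
  move: hy; move: (nz (ls y)) => a; move: (\sum_(i < m | i != y) (nz (ls i)).-1)%N => S. case: a => [|[|a]] //= _; rewrite add0n; lia.
exists m', B; split => //; apply: le_trans hB.
have [G0 ->] := Ubar_attained rho q U A.
apply: le_trans (avgU_ins G0 hC3 hq pA hA (psdD _ _ _ dP) (psdD _ _ _ dQ) P0 Q0 _ _) _.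
- by move=> nu; apply: trD dP (hrho nu).
- by move=> nu; apply: trD dQ (hrho nu).
apply: avgU_le_Ubar => G; exact: hreal.
Qed.

End Main.

Theorem mainTheorem6 (C : numClosedFieldType) (d n : nat)
    (rho : 'I_n -> 'M[C]_d) (q : 'I_n -> C)
    (hrho : forall nu, density (rho nu))
    (hq : forall nu, 0 < q nu) (hqsum : \sum_(nu < n) q nu = 1)
    (U : utility C d n)
    (hUreal : forall m (A : {ffun 'I_m -> 'M[C]_d}) y G nu, povm A -> U m A y G nu \is Num.real)
    (hC1 : condC1 U) (hC2 : condC2 rho q U) (hC3 : condC3 rho U) :
  (forall m (A : {ffun 'I_m -> 'M[C]_d}), povm A ->
     exists m' (B : {ffun 'I_m' -> 'M[C]_d}),
       [/\ povm B, (forall y, \rank (B y) = 1%N) & Ubar rho q U A <= Ubar rho q U B])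
  /\
  ((exists m0 (A0 : {ffun 'I_m0 -> 'M[C]_d}), povm A0 /\
      forall m (A : {ffun 'I_m -> 'M[C]_d}), povm A -> Ubar rho q U A <= Ubar rho q U A0) ->
   exists m' (B : {ffun 'I_m' -> 'M[C]_d}),
     [/\ povm B, (forall y, \rank (B y) = 1%N) &
         forall m (A : {ffun 'I_m -> 'M[C]_d}), povm A -> Ubar rho q U A <= Ubar rho q U B]).
Proof.
have hpr : forall nu, psdmx (rho nu) by move=> nu; have [] := hrho nu.
have hreal : forall m (A : {ffun 'I_m -> 'M[C]_d}) G, povm A ->
    avgU rho q U A G \is Num.real.
  move=> m A G pA; apply: rpred_sum => y _; apply: rpred_sum => nu _.
  apply: rpredM; last exact: hUreal.
  apply: rpredM; first exact: gtr0_real.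
  have [pAy _] := pA; have [W [l [Wu hl hX]]] := decomp_exists (pAy y).
  by apply: ger0_real; rewrite hX; apply: tr_nonneg.
have part1 : forall m (A : {ffun 'I_m -> 'M[C]_d}), povm A ->
     exists m' (B : {ffun 'I_m' -> 'M[C]_d}),
       [/\ povm B, (forall y, \rank (B y) = 1%N) & Ubar rho q U A <= Ubar rho q U B].
  move=> m A pA.
  have : forall y, exists p : 'M[C]_d * 'rV[C]_d, decomp (A y) p.1 p.2.
    move=> y; have [pAy _] := pA; have [W [l h]] := decomp_exists (pAy y).
    by exists (W, l).
  case/fin_all_exists => f hf.
  exact: (@main_ind C d n rho q U hC3 hq hpr hreal _ m A (fun y => (f y).1) (fun y => (f y).2) pA hf (leqnn _)).
split => //.
move=> [m0 [A0 [pA0 hmax]]]; have [m' [B [pB rB hB]]] := part1 m0 A0 pA0.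
exists m', B; split => // m A pA; exact: le_trans (hmax m A pA) hB.
Qed.
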